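(* For all integers $0<k \leq \ell < n$, the polynomial \[ \overline{ { n \brack k}}_{q,t} \overline{ { n \brack \ell }}_{q,t} - \overline{ { n-1 \brack k-1}}_{q,t} \overline{ { n+1 \brack \ell+1 }}_{q,t} \] has non-negative coefficients as a polynomial in $q$ and $t$.
   Context: An overpartition is a partition in which the last occurrence of each distinct part size may be overlined; its weight $|\lambda|$ is the sum of its parts. For integers $0\le b\le a$, $\overline{{a \brack b}}_{q,t}=\sum_{\lambda} t^{\#_o(\lambda)} q^{|\lambda|}$, the sum over all overpartitions $\lambda$ with largest part at most $a-b$ and at most $b$ parts, $\#_o(\lambda)$ being the number of overlined parts. *)

(* Defs.v *)
From HB Require Import structures.
From mathcomp Require Import all_boot all_order all_algebra.
Set Implicit Arguments. Unset Strict Implicit. Unset Printing Implicit Defensive.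
Import Order.TTheory GRing.Theory Num.Theory.

(* An overpartition is encoded as a list of (part, overlined?) pairs, listed
   with parts in nonincreasing order.  Consecutive entries x, y satisfy
   y.1 <= x.1, and if x is overlined then y.1 < x.1, i.e. only the last
   occurrence of a part size may be overlined. *)
Definition ovp_step (x y : nat * bool) : bool :=
  (y.1 <= x.1) && (x.2 ==> (y.1 < x.1)).

Definition is_ovp_in (m b : nat) (s : seq (nat * bool)) : bool :=
  [&& sorted ovp_step s, all (fun x => 0 < x.1) s,
      all (fun x => x.1 <= m) s & size s <= b].

Definition ovp_weight (s : seq (nat * bool)) : nat := sumn (map fst s).
Definition ovp_noverl (s : seq (nat * bool)) : nat := count snd s.

Definition seq_of_tuple (m len : nat) (tp : len.-tuple ('I_m.+1 * bool))
  : seq (nat * bool) := [seq (nat_of_ord x.1, x.2) | x <- tp].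

(* Over-q,t-binomial  \overline{[a brack b]}_{q,t} as a bivariate polynomial
   with integer coefficients: outer variable t, inner variable q
   (type {poly {poly int}}). *)
Definition qt_term (s : seq (nat * bool)) : {poly {poly int}} :=
  ((('X : {poly int}) ^+ ovp_weight s)%:P * 'X ^+ ovp_noverl s)%R.

Definition overbinom (a b : nat) : {poly {poly int}} :=
  (\sum_(len < b.+1)
     \sum_(tp : len.-tuple ('I_(a - b).+1 * bool)
            | is_ovp_in (a - b) b (seq_of_tuple tp))
       qt_term (seq_of_tuple tp))%R.

Definition nonneg_coefs (P : {poly {poly int}}) : Prop :=
  forall i j : nat, (0 <= (P`_i)`_j)%R.

(* Main.v *)
Require Import Defs.
From mathcomp Require Import all_boot all_order all_algebra.
Import GRing.Theory Num.Theory.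
From mathcomp Require Import zify.
Set Implicit Arguments. Unset Strict Implicit. Unset Printing Implicit Defensive.

Definition d0 : nat * bool := (0, false).
Definition Pm t W (la mu : seq (nat * bool)) (m : nat) : bool :=
  ((nth d0 la m).1 <= W) && ovp_step (nth d0 mu (m + t)) (nth d0 la m).
Definition idx t W (la mu : seq (nat * bool)) := find (Pm t W la mu) (iota 0 (size la)).
Definition unswp t i (p : seq (nat * bool) * seq (nat * bool)) :=
  (take i p.1 ++ drop (i + t.+1) p.2, take (i + t.+1) p.2 ++ drop i p.1).
Definition swp t W (p : seq (nat * bool) * seq (nat * bool)) :=
  unswp t (idx t W p.1 p.2) p.

Lemma find_iota_char (p : pred nat) n i : i <= n ->
  (forall m, m < i -> ~~ p m) -> (i < n -> p i) -> find p (iota 0 n) = i.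
Proof.
move=> lein Hb Hi.
have fs := find_size p (iota 0 n); rewrite size_iota in fs.
case: (ltngtP (find p (iota 0 n)) i) => // H.
- have hh : has p (iota 0 n).
    by rewrite has_find size_iota; apply: leq_trans H lein.
  have := nth_find 0 hh; rewrite nth_iota ?add0n; last by apply: leq_trans H lein.
  by move=> Hp; have := Hb _ H; rewrite Hp.
- have := before_find 0 H; rewrite nth_iota ?add0n; last by apply: leq_trans H fs.
  by rewrite Hi //; apply: leq_trans H fs.
Qed.

Section Valid.
Variables (W : nat) (b : nat) (s : seq (nat * bool)).
Hypothesis hv : is_ovp_in W b s.

Lemma v_sorted : sorted ovp_step s. Proof. by case/and4P: hv. Qed.
Lemma v_pos j : j < size s -> 0 < (nth d0 s j).1.
Proof. by case/and4P: hv => _ /(all_nthP d0) H _ _; apply: H. Qed.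
Lemma v_bnd j : (nth d0 s j).1 <= W.
Proof.
case: (ltnP j (size s)) => hj; last by rewrite nth_default.
by case/and4P: hv => _ _ /(all_nthP d0) H _; apply: H.
Qed.
Lemma v_size : size s <= b. Proof. by case/and4P: hv. Qed.
Lemma v_step j : ovp_step (nth d0 s j) (nth d0 s j.+1).
Proof.
case: (ltnP j.+1 (size s)) => hj.
  by apply: (sortedP d0 v_sorted).
rewrite (nth_default _ hj).
case: (ltnP j (size s)) => hj2; last by rewrite nth_default.
have := v_pos hj2; rewrite /ovp_step /=; case: (nth d0 s j) => [x []] /=; lia.
Qed.

Lemma v_mono j1 j2 : j1 <= j2 -> (nth d0 s j2).1 <= (nth d0 s j1).1.
Proof.
move=> /subnKC <-; elim: (j2 - j1) => [|r IH]; first by rewrite addn0.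
apply: leq_trans IH; rewrite addnS.
by have /andP[] := v_step (j1 + r).
Qed.
End Valid.

Lemma v_d0 W b s j : is_ovp_in W b s -> ovp_step (nth d0 s j) d0.
Proof.
move=> hv; case: (ltnP j (size s)) => hj; last by rewrite nth_default.
have := v_pos hv hj; rewrite /ovp_step /=; case: (nth d0 s j) => [x []] /=; lia.
Qed.

Lemma junction W (x a b c : nat * bool) : ovp_step a b -> ovp_step b c -> c.1 <= W ->
  ~~ ((x.1 <= W) && ovp_step a x) -> ovp_step x c.
Proof.
case: x a b c => [x1 x2] [a1 a2] [b1 b2] [c1 c2]; rewrite /ovp_step /=.
case: x2; case: a2; case: b2; case: c2 => /=; rewrite ?implyTb ?implybT ?andbT; lia.
Qed.

Lemma nth_cat_take_drop (x y : seq (nat * bool)) i r j : i <= size x ->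
  nth d0 (take i x ++ drop r y) j = if j < i then nth d0 x j else nth d0 y (r + (j - i)).
Proof.
move=> hi; rewrite nth_cat size_takel //; case: ifP => hj.
  by rewrite nth_take.
by rewrite nth_drop.
Qed.

Section Swap.
Variables (W1 W K t : nat) (la mu : seq (nat * bool)).
Hypothesis hW : W <= W1.
Hypothesis hla : is_ovp_in W1 K la.
Hypothesis hmu : is_ovp_in W (K + t.+2) mu.

Let i := idx t W la mu.

Lemma i_le : i <= size la.
Proof. by have := find_size (Pm t W la mu) (iota 0 (size la)); rewrite size_iota. Qed.

Lemma i_before m : m < i -> ~~ Pm t W la mu m.
Proof.
move=> hm; have := before_find 0 hm; rewrite nth_iota ?add0n => [->//|].
exact: leq_trans hm i_le.
Qed.

Lemma i_at : Pm t W la mu i.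
Proof.
case: (ltnP i (size la)) => hi.
  have hh : has (Pm t W la mu) (iota 0 (size la)) by rewrite has_find size_iota.
  by have := nth_find 0 hh; rewrite -/(idx _ _ _ _) -/i nth_iota ?add0n.
rewrite /Pm (nth_default _ hi) /= (v_d0 _ hmu).
done.
Qed.

Lemma caseB : size mu < i + t.+1 -> i = size la.
Proof.
move=> hs; apply/eqP; rewrite eqn_leq i_le /=; rewrite leqNgt; apply/negP => hi.
have := i_at; rewrite /Pm (nth_default d0 (_ : size mu <= i + t)); last by lia.
have := v_pos hla hi; rewrite /ovp_step /=; lia.
Qed.

Hypothesis hA : i + t.+1 <= size mu.

Lemma size_la' : size (take i la ++ drop (i + t.+1) mu) = i + (size mu - (i + t.+1)).
Proof. by rewrite size_cat size_takel ?i_le // size_drop. Qed.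

Lemma size_mu' : size (take (i + t.+1) mu ++ drop i la) = i + t.+1 + (size la - i).
Proof. by rewrite size_cat size_takel // size_drop. Qed.

Lemma validA1 : is_ovp_in W1 K.+1 (take i la ++ drop (i + t.+1) mu).
Proof.
have hil := i_le; have szl := v_size hla; have szm := v_size hmu.
apply/and4P; split.
- apply/(sortedP d0) => j; rewrite size_la' => hj.
  rewrite !nth_cat_take_drop //.
  case: (ltngtP j.+1 i) => h.
  + by apply: (v_step hla).
  + have -> : i + t.+1 + (j.+1 - i) = (i + t.+1 + (j - i)).+1 by lia.
    by apply: (v_step hmu).
  + have -> : i + t.+1 + (j.+1 - i) = (j + t).+2 by lia.
    apply: (junction (a := nth d0 mu (j + t)) (b := nth d0 mu (j + t).+1)).
    * exact: (v_step hmu).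
    * exact: (v_step hmu).
    * exact: (v_bnd hmu).
    * by apply: i_before; rewrite -h.
- apply/(all_nthP d0) => j; rewrite size_la' => hj.
  rewrite nth_cat_take_drop //; case: ifP => h.
  + by apply: (v_pos hla); lia.
  + by apply: (v_pos hmu); lia.
- apply/(all_nthP d0) => j; rewrite size_la' => hj.
  rewrite nth_cat_take_drop //; case: ifP => h.
  + exact: (v_bnd hla).
  + exact: leq_trans (v_bnd hmu _) hW.
- rewrite size_la'; lia.
Qed.

Lemma validA2 : is_ovp_in W (K + t.+1) (take (i + t.+1) mu ++ drop i la).
Proof.
have hil := i_le; have szl := v_size hla; have szm := v_size hmu.
apply/and4P; split.
- apply/(sortedP d0) => j; rewrite size_mu' => hj.
  rewrite !nth_cat_take_drop //.
  case: (ltngtP j.+1 (i + t.+1)) => h.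
  + by apply: (v_step hmu).
  + have -> : i + (j.+1 - (i + t.+1)) = (i + (j - (i + t.+1))).+1 by lia.
    by apply: (v_step hla).
  + have -> : j = i + t by lia.
    have -> : (i + t).+1 - (i + t.+1) = 0 by lia. rewrite addn0.
    by have /andP[] := i_at.
- apply/(all_nthP d0) => j; rewrite size_mu' => hj.
  rewrite nth_cat_take_drop //; case: ifP => h.
  + by apply: (v_pos hmu); lia.
  + by apply: (v_pos hla); lia.
- apply/(all_nthP d0) => j; rewrite size_mu' => hj.
  rewrite nth_cat_take_drop //; case: ifP => h.
  + exact: (v_bnd hmu).
  + apply: leq_trans (v_mono hla (leq_addr _ _)) _.
    by have /andP[] := i_at.
- rewrite size_mu'; lia.
Qed.
End Swap.

Lemma weaken_size W b b' s : is_ovp_in W b s -> size s <= b' -> is_ovp_in W b' s.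
Proof. by case/and4P => h1 h2 h3 _ h4; apply/and4P. Qed.

Lemma unswp_perm t i p : perm_eq ((unswp t i p).1 ++ (unswp t i p).2) (p.1 ++ p.2).
Proof.
case: p => la mu /=; apply/permP => a.
rewrite -[in RHS](cat_take_drop i la) -[in RHS](cat_take_drop (i + t.+1) mu) !count_cat; lia.
Qed.

Lemma unswp_invol t i la mu : i <= size la -> i + t.+1 <= size mu ->
  unswp t i (unswp t i (la, mu)) = (la, mu).
Proof.
move=> h1 h2; rewrite /unswp /=.
rewrite take_size_cat ?size_takel // drop_size_cat ?size_takel //.
rewrite take_size_cat ?size_takel // drop_size_cat ?size_takel //.
by rewrite !cat_take_drop.
Qed.

Section SwapProps.
Variables (W1 W K t : nat) (la mu : seq (nat * bool)).
Hypothesis hW : W <= W1.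
Hypothesis hla : is_ovp_in W1 K la.
Hypothesis hmu : is_ovp_in W (K + t.+2) mu.

Lemma swp_caseB : size mu < idx t W la mu + t.+1 -> swp t W (la, mu) = (la, mu).
Proof.
move=> hs; have hi := caseB hW hla hmu hs.
rewrite /swp /unswp /= hi take_size drop_size drop_oversize ?take_oversize ?cats0 //; lia.
Qed.

Lemma swp_valid : is_ovp_in W1 K.+1 (swp t W (la, mu)).1 &&
                  is_ovp_in W (K + t.+1) (swp t W (la, mu)).2.
Proof.
case: (ltnP (size mu) (idx t W la mu + t.+1)) => hs.
  have hi := caseB hW hla hmu hs.
  rewrite swp_caseB //= (weaken_size hla) ?(weaken_size hmu) //.
    by have := v_size hla; lia.
  by have := v_size hla; lia.
by rewrite (validA1 hW hla hmu hs) (validA2 hW hla hmu hs).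
Qed.

Lemma idx_swp : idx t W (swp t W (la, mu)).1 (swp t W (la, mu)).2 = idx t W la mu.
Proof.
case: (ltnP (size mu) (idx t W la mu + t.+1)) => hs.
  by rewrite swp_caseB.
have hil := i_le W t la mu.
rewrite [LHS]/idx; apply: find_iota_char.
- rewrite /swp /unswp /= size_cat size_takel //; exact: leq_addr.
- move=> m hm; rewrite /swp /unswp /= /Pm.
  rewrite !nth_cat_take_drop // ?size_takel //.
  have -> : (m + t < idx t W la mu + t.+1) = true by lia.
  rewrite hm; exact: (i_before hm).
- move=> _; rewrite /swp /unswp /= /Pm.
  rewrite !nth_cat_take_drop // ?size_takel //.
  rewrite ltnn subnn addn0.
  have -> : (idx t W la mu + t < idx t W la mu + t.+1) = true by lia.
  rewrite (v_bnd hmu) /=.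
  have -> : idx t W la mu + t.+1 = (idx t W la mu + t).+1 by lia.
  exact: (v_step hmu).
Qed.

Lemma swp_recover : unswp t (idx t W (swp t W (la, mu)).1 (swp t W (la, mu)).2)
                      (swp t W (la, mu)) = (la, mu).
Proof.
rewrite idx_swp.
case: (ltnP (size mu) (idx t W la mu + t.+1)) => hs.
  rewrite swp_caseB //; rewrite -{2}(swp_caseB hs); done.
by rewrite /swp unswp_invol // (i_le W t la mu).
Qed.
End SwapProps.


Definition blk m b len : seq (seq (nat * bool)) :=
  [seq @seq_of_tuple m len tp | tp <- [seq tp <- index_enum (len.-tuple ('I_m.+1 * bool))
                                       | is_ovp_in m b (seq_of_tuple tp)]].
Definition Lst m b := flatten [seq blk m b len | len <- iota 0 b.+1].

Lemma overbinom_Lst a b : overbinom a b = (\sum_(s <- Lst (a - b) b) qt_term s)%R.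
Proof.
rewrite /overbinom /Lst big_flatten big_map.
rewrite (_ : iota 0 b.+1 = index_iota 0 b.+1); last by rewrite /index_iota subn0.
rewrite big_mkord.
apply: eq_bigr => len _.
by rewrite /blk big_map big_filter.
Qed.

Lemma mem_blk m b len s : (s \in blk m b len) = (size s == len) && is_ovp_in m b s.
Proof.
apply/idP/idP.
  case/mapP => tp; rewrite mem_filter => /andP[hP _] ->.
  by rewrite hP /seq_of_tuple size_map size_tuple eqxx.
case/andP => /eqP <- hv.
have hb : all (fun x => x.1 <= m) s by case/and4P: hv.
pose tp := map_tuple (fun x : nat * bool => ((inord x.1 : 'I_m.+1), x.2)) (in_tuple s).
have e : seq_of_tuple tp = s.
  rewrite /seq_of_tuple /= -map_comp; apply: map_id_in => x hx /=.
  rewrite inordK; first by case: x hx.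
  by rewrite ltnS; apply: (allP hb).
rewrite -{1}e; apply: map_f.
by rewrite mem_filter e hv mem_index_enum.
Qed.

Lemma mem_Lst m b s : (s \in Lst m b) = is_ovp_in m b s.
Proof.
apply/flattenP/idP.
  by case=> r /mapP[len _ ->]; rewrite mem_blk => /andP[].
move=> hv; exists (blk m b (size s)); last by rewrite mem_blk eqxx.
apply: map_f; rewrite mem_iota /= add0n ltnS.
by case/and4P: hv.
Qed.

Lemma uniq_flat_size (T : eqType) (f : nat -> seq (seq T)) :
  (forall len, uniq (f len)) -> (forall len x, x \in f len -> size x = len) ->
  forall n m, uniq (flatten [seq f len | len <- iota m n]).
Proof.
move=> hu hs; elim=> [|n IH] m //=.
rewrite cat_uniq hu IH andbT /=; apply/hasP => -[x /flattenP[r /mapP[j hj ->] hx] hx2].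
have := hs _ _ hx; have := hs _ _ hx2; rewrite mem_iota in hj; lia.
Qed.

Lemma uniq_Lst m b : uniq (Lst m b).
Proof.
apply: uniq_flat_size => [len|len x]; last by rewrite mem_blk => /andP[/eqP].
rewrite /blk map_inj_uniq ?filter_uniq ?index_enum_uniq //.
move=> tp1 tp2 /(inj_map _) h; apply: val_inj; apply: h.
by case=> [a1 b1] [a2 b2] /= [/val_inj -> ->].
Qed.


Local Open Scope ring_scope.

Definition Fq (p : seq (nat * bool) * seq (nat * bool)) : {poly {poly int}} :=
  qt_term p.1 * qt_term p.2.

Lemma FqE p : Fq p = ('X^(ovp_weight (p.1 ++ p.2)))%:P * 'X^(ovp_noverl (p.1 ++ p.2)).
Proof.
rewrite /Fq /qt_term /ovp_weight /ovp_noverl map_cat sumn_cat count_cat !exprD polyCM.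
by rewrite mulrACA.
Qed.

Lemma Fq_perm p q : perm_eq (p.1 ++ p.2) (q.1 ++ q.2) -> Fq p = Fq q.
Proof.
move=> pe; rewrite !FqE /ovp_weight /ovp_noverl.
by rewrite (perm_sumn (perm_map _ pe)) (permP pe).
Qed.

Lemma sumL_mul (L1 L2 : seq (seq (nat * bool))) :
  (\sum_(x <- L1) qt_term x) * (\sum_(y <- L2) qt_term y) =
  \sum_(p <- [seq (x, y) | x <- L1, y <- L2]) Fq p.
Proof.
rewrite big_allpairs mulr_suml; apply: eq_bigr => x _.
by rewrite mulr_sumr.
Qed.

Lemma nonneg_sum r : nonneg_coefs (\sum_(p <- r) Fq p).
Proof.
move=> i j; rewrite !coef_sum; apply: sumr_ge0 => p _.
rewrite FqE coefMXn; case: ifP => _; first by rewrite coef0.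
rewrite coefC; case: ifP => _; last by rewrite coef0.
by rewrite coefXn ler0n.
Qed.

Lemma inj_sum (T : eqType) (F : T -> {poly {poly int}}) (N P : seq T) (g : T -> T) :
  uniq N -> uniq P -> {in N, forall x, g x \in P} -> {in N &, injective g} ->
  {in N, forall x, F (g x) = F x} ->
  \sum_(x <- P) F x = \sum_(x <- N) F x + \sum_(x <- [seq x <- P | x \notin map g N]) F x.
Proof.
move=> uN uP hP hinj hF.
have u : uniq (map g N) by rewrite map_inj_in_uniq.
have pe : perm_eq P (map g N ++ [seq x <- P | x \notin map g N]).
  apply: uniq_perm => //.
    rewrite cat_uniq u filter_uniq // andbT.
    by apply/hasP => -[x]; rewrite mem_filter => /andP[/negP].
  move=> x; rewrite mem_cat mem_filter.
  case: (boolP (x \in map g N)) => //= /mapP[y hy ->]; exact: hP.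
rewrite (perm_big _ pe) big_cat big_map /=; congr (_ + _).
exact: eq_big_seq.
Qed.

Local Close Scope ring_scope.

Theorem theorem6p2 (n k l : nat) :
  0 < k -> k <= l -> l < n ->
  nonneg_coefs
    (overbinom n k * overbinom n l
     - overbinom (n - 1) (k - 1) * overbinom (n + 1) (l + 1))%R.
Proof.
move=> hk hkl hln.
rewrite !overbinom_Lst !sumL_mul.
set W1 := (n - k)%N; set W := (n - l)%N; set K := (k - 1)%N; set t := (l - k)%N.
have e1 : (n - 1 - (k - 1))%N = W1 by rewrite /W1; lia.
have e2 : (n + 1 - (l + 1))%N = W by rewrite /W; lia.
have e3 : (l + 1)%N = (K + t.+2)%N by rewrite /K /t; lia.
have e4 : k = K.+1 by rewrite /K; lia.
have e5 : l = (K + t.+1)%N by rewrite /K /t; lia.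
have hW : (W <= W1)%N by rewrite /W /W1; lia.
rewrite e1 e2 -/W1 -/W -/K.
rewrite e3 {1}e4 {1}e5.
set N := [seq (x, y) | x <- Lst W1 K, y <- Lst W (K + t.+2)].
set P := [seq (x, y) | x <- Lst W1 K.+1, y <- Lst W (K + t.+1)].
have memN p : p \in N -> is_ovp_in W1 K p.1 && is_ovp_in W (K + t.+2) p.2.
  by case/allpairsP => -[x y] /= [hx hy ->]; rewrite -!mem_Lst hx hy.
rewrite (@inj_sum _ Fq N P (swp t W)).
- by rewrite addrAC subrr add0r; apply: nonneg_sum.
- by apply: allpairs_uniq; rewrite ?uniq_Lst // => -[a b] [c d] _ _.
- by apply: allpairs_uniq; rewrite ?uniq_Lst // => -[a b] [c d] _ _.
- move=> [la mu] /memN /andP[h1 h2].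
  have /andP[v1 v2] := swp_valid hW h1 h2.
  rewrite [swp t W _]surjective_pairing; apply: allpairs_f; by rewrite mem_Lst.
- move=> [la mu] [la' mu'] /memN /andP[h1 h2] /memN /andP[h1' h2'] e.
  rewrite -(swp_recover hW h1 h2) -(swp_recover hW h1' h2') e //.
- move=> p _; apply: Fq_perm; exact: unswp_perm.
Qed.
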